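(* For $1\le i\le k$ let $G_i$ be an $r_i$-regular graph with $n_i\ge 2$ vertices and let $A_i$ be an Abelian group of order $n_i$. Let $r=\sum_{i=1}^k r_i$ and suppose $\exp(A_i)$ divides $r-r_i$ for every $1\le i\le k$. (a) If each $G_i$ is $A_i$-distance antimagic, then $G_1\Box\cdots\Box G_k$ is $A_1\times\cdots\times A_k$-distance antimagic. (b) If each $G_i$ is $A_i$-distance magic, then $G_1\Box\cdots\Box G_k$ is $A_1\times\cdots\times A_k$-distance magic.
   Context: The Cartesian product $G_1\Box\cdots\Box G_k$ has vertex set $V(G_1)\times\cdots\times V(G_k)$, with $(x_1,\ldots,x_k)$ and $(y_1,\ldots,y_k)$ adjacent iff they differ in exactly one coordinate $i$ and $x_iy_i\in E(G_i)$. $\exp(A)$ is the least positive integer $m$ with $mx=0$ for all $x\in A$. For a graph $G$ with $n$ vertices and an Abelian group $A$ of order $n$ (written additively), and a bijection $f:V(G)\to A$, the weight of $x$ is $w_f(x)=\sum_{y\in N(x)} f(y)$ computed in $A$ ($N(x)$ the open neighbourhood). $f$ is an $A$-distance antimagic labelling if all weights are pairwise distinct, and an $A$-distance magic labelling if all weights are equal. $G$ is $A$-distance antimagic (resp. magic) if it admits such a labelling. *)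

(* Defs.v *)
From HB Require Import structures.
From mathcomp Require Import all_boot all_order all_fingroup all_solvable all_algebra.
Set Implicit Arguments. Unset Strict Implicit. Unset Printing Implicit Defensive.
Import GRing.Theory.
Local Open Scope ring_scope.

Definition simple_graph (V : finType) (e : rel V) : Prop :=
  symmetric e /\ irreflexive e.

Definition nbhd (V : finType) (e : rel V) (x : V) : {set V} := [set y | e x y].

Definition regular (V : finType) (e : rel V) (r : nat) : Prop :=
  forall x : V, #|nbhd e x| = r.

Definition weight (V : finType) (e : rel V) (A : zmodType) (f : V -> A) (x : V) : A :=
  \sum_(y in nbhd e x) f y.

Definition distance_antimagic_labelling (V : finType) (e : rel V) (A : finZmodType)
  (f : V -> A) : Prop := bijective f /\ injective (weight e f).

Definition distance_magic_labelling (V : finType) (e : rel V) (A : finZmodType)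
  (f : V -> A) : Prop := bijective f /\ (exists c : A, forall x, weight e f x = c).

(* G is A-distance antimagic / magic (|A| = |V(G)| is stated separately). *)
Definition distance_antimagic (V : finType) (e : rel V) (A : finZmodType) : Prop :=
  exists f : V -> A, distance_antimagic_labelling e f.
Definition distance_magic (V : finType) (e : rel V) (A : finZmodType) : Prop :=
  exists f : V -> A, distance_magic_labelling e f.

Definition expA (A : finZmodType) : nat := exponent [set: A].

Definition cart_prod (I : finType) (V : I -> finType) (e : forall i, rel (V i)) :
  rel {dffun forall i, V i} :=
  fun x y => [exists i, e i (x i) (y i) && [forall j, (j != i) ==> (x j == y j)]].

Section DProd.
Variables (I : finType) (A : I -> finZmodType).
Definition dprodZ := {dffun forall i, A i}.
HB.instance Definition _ := Finite.on dprodZ.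
Definition dz0 : dprodZ := [ffun i => 0].
Definition dadd (f g : dprodZ) : dprodZ := [ffun i => f i + g i].
Definition dopp (f : dprodZ) : dprodZ := [ffun i => - f i].
Lemma daddA : associative dadd.
Proof. by move=> f g h; apply/ffunP=> i; rewrite !ffunE addrA. Qed.
Lemma daddC : commutative dadd.
Proof. by move=> f g; apply/ffunP=> i; rewrite !ffunE addrC. Qed.
Lemma dadd0 : left_id dz0 dadd.
Proof. by move=> f; apply/ffunP=> i; rewrite !ffunE add0r. Qed.
Lemma daddN : left_inverse dz0 dopp dadd.
Proof. by move=> f; apply/ffunP=> i; rewrite !ffunE addNr. Qed.
HB.instance Definition _ := GRing.isZmodule.Build dprodZ daddA daddC dadd0 daddN.
End DProd.

(* Main.v *)
Require Import Defs.
From HB Require Import structures.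
From mathcomp Require Import all_boot all_order all_fingroup all_solvable all_algebra.
Set Implicit Arguments. Unset Strict Implicit. Unset Printing Implicit Defensive.
Import GRing.Theory.

Lemma ffun_sum (I : finType) (A : I -> finZmodType) (T : finType) (P : pred T)
  (G : T -> dprodZ A) j : (\sum_(y | P y) G y)%R j = (\sum_(y | P y) G y j)%R.
Proof.
elim/big_rec2: _ => [|y a b _ <-]; first by rewrite /= ffunE.
by rewrite /= ffunE.
Qed.

Lemma exp_kill (A : finZmodType) (m : nat) (a : A) : expA A %| m -> (a *+ m = 0)%R.
Proof.
move=> /dvdnP [q ->]; rewrite mulnC mulrnA /expA.
rewrite -[(a *+ _)%R]FinRing.zmodXgE expg_exponent ?in_setT //.
exact: mul0rn.
Qed.

Section Prod.
Local Unset Implicit Arguments.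
Variables (k : nat) (V : 'I_k -> finType) (e : forall i, rel (V i)).
Hypothesis irr : forall i : 'I_k, irreflexive (e i).
Local Notation PV := {dffun forall i, V i}.
Local Notation ce := (cart_prod e).

Definition upd (x : PV) i (z : V i) : PV := [ffun j => dfwith x z j].

Lemma upd_inj x i : injective (@upd x i).
Proof.
move=> z1 z2 /ffunP /(_ i); by rewrite !ffunE !dfwith_in.
Qed.

Lemma nb_split (B : zmodType) (g : PV -> B) x :
  (\sum_(y in nbhd ce x) g y)%R = (\sum_i \sum_(y in nbhd ce x | x i != y i) g y)%R.
Proof.
under [RHS]eq_bigr do rewrite big_mkcondr.
rewrite exchange_big /=; apply: eq_bigr => y yN.
rewrite -big_mkcond /= sumr_const.
have -> : #|[pred i | x i != y i]| = 1 => //.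
move: yN; rewrite inE => /existsP [i /andP [exy /forallP H]].
rewrite -(card1 i); apply: eq_card => j; rewrite !inE.
case: (eqVneq j i) => [->|ne].
  by apply/negP => /eqP E; move: exy; rewrite -E irr.
by move: (H j); rewrite ne /= => ->.
Qed.

Lemma nb_slice x i :
  [set y in nbhd ce x | x i != y i] = [set @upd x i z | z in nbhd (e i) (x i)].
Proof.
apply/setP => y; rewrite !inE; apply/idP/idP.
  case/andP => /existsP [i0 /andP [exy /forallP H]] nxy.
  have ei : i0 = i.
    apply/eqP; apply: contraR nxy => ne; move: (H i); rewrite eq_sym ne /=.
    by move=> /eqP ->.
  subst i0; apply/imsetP; exists (y i); first by rewrite inE.
  apply/ffunP => j; rewrite ffunE; case: (eqVneq i j) => [<-|ne].
    by rewrite dfwith_in.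
  rewrite dfwith_out //; move: (H j); rewrite eq_sym ne /= => /eqP ->//.
case/imsetP => z; rewrite inE => ez ->.
rewrite ffunE dfwith_in; apply/andP; split; last first.
  by apply/negP => /eqP E; move: ez; rewrite -E irr.
apply/existsP; exists i; rewrite ffunE dfwith_in ez /=.
apply/forallP => j; apply/implyP => ne; rewrite ffunE dfwith_out //.
by rewrite eq_sym.
Qed.

Lemma nb_slice_sum (B : zmodType) (g : PV -> B) x i :
  (\sum_(y in nbhd ce x | x i != y i) g y)%R = (\sum_(z in nbhd (e i) (x i)) g (@upd x i z))%R.
Proof.
rewrite (eq_bigl (fun y => y \in [set y in nbhd ce x | x i != y i])); last first.
  by move=> y; rewrite !inE.
rewrite nb_slice big_imset //; by move=> a b _ _; apply: upd_inj.
Qed.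


Lemma weight_prod (A : 'I_k -> finZmodType) (f : forall i, V i -> A i) (r_ : 'I_k -> nat)
  (reg : forall i, regular (e i) (r_ i))
  (ex : forall i, expA (A i) %| (\sum_(j < k) r_ j) - r_ i) (x : PV) :
  weight ce (fun y : PV => [ffun i => f i (y i)] : dprodZ A) x
  = [ffun j => weight (e j) (f j) (x j)] :> dprodZ A.
Proof.
apply/ffunP => j; rewrite /weight ffun_sum ffunE.
under eq_bigr do rewrite ffunE.
rewrite (nb_split (A j)).
under eq_bigr do rewrite nb_slice_sum.
rewrite (bigD1 j) //=.
have -> : (\sum_(z in nbhd (e j) (x j)) f j (@upd x j z j))%R =
          (\sum_(z in nbhd (e j) (x j)) f j z)%R.
  by apply: eq_bigr => z _; rewrite ffunE dfwith_in.
rewrite -[RHS]addr0; congr (_ + _)%R.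
have -> : (\sum_(i < k | i != j) \sum_(z in nbhd (e i) (x i)) f j (@upd x i z j))%R =
          (\sum_(i < k | i != j) f j (x j) *+ r_ i)%R.
  apply: eq_bigr => i ne.
  rewrite /upd; under eq_bigr => z _ do rewrite ffunE (dfwith_out _ _ ne).
  by rewrite sumr_const reg.
rewrite sumrMnr; apply: exp_kill.
have -> : (\sum_(i < k | i != j) r_ i)%N = (\sum_(i < k) r_ i - r_ j)%N.
  by rewrite [in RHS](bigD1 j) //= addKn.
exact: ex.
Qed.
End Prod.

From Stdlib Require Import ClassicalEpsilon.

Lemma dchoice (I : Type) (T : I -> Type) (P : forall i, T i -> Prop) :
  (forall i, exists t, P i t) -> { f : forall i, T i | forall i, P i (f i) }.
Proof.
move=> H; exists (fun i => proj1_sig (constructive_indefinite_description _ (H i))).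
by move=> i; case: (constructive_indefinite_description _ (H i)).
Qed.

Lemma prod_bij (k : nat) (V : 'I_k -> finType) (A : 'I_k -> finZmodType)
  (f : forall i, V i -> A i) : (forall i, bijective (f i)) ->
  bijective (fun y : {dffun forall i, V i} => [ffun i => f i (y i)] : dprodZ A).
Proof.
move=> Hb.
have Hb' : forall i, exists g : A i -> V i, cancel (f i) g /\ cancel g (f i).
  by move=> i; case: (Hb i) => g c1 c2; exists g.
have [g Hg] := dchoice Hb'.
exists (fun a : dprodZ A => [ffun i => g i (a i)] : {dffun forall i, V i}).
  by move=> y; apply/ffunP => i; rewrite !ffunE (Hg i).1.
by move=> a; apply/ffunP => i; rewrite !ffunE (Hg i).2.
Qed.

Theorem mainTheorem6 (k : nat) (V : 'I_k -> finType) (e : forall i, rel (V i))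
  (A : 'I_k -> finZmodType) (r_ : 'I_k -> nat) :
  (forall i, simple_graph (e i)) ->
  (forall i, regular (e i) (r_ i)) ->
  (forall i, 2 <= #|V i|) ->
  (forall i, #|A i| = #|V i|) ->
  (forall i, expA (A i) %| (\sum_(j < k) r_ j) - r_ i) ->
  ((forall i, distance_antimagic (e i) (A i)) ->
     distance_antimagic (cart_prod e) (dprodZ A)) /\
  ((forall i, distance_magic (e i) (A i)) ->
     distance_magic (cart_prod e) (dprodZ A)).
Proof.
move=> Hs Hreg _ _ Hex.
have irr : forall i, irreflexive (e i) by move=> i; case: (Hs i).
split.
  move=> H; have [f Hf] := dchoice H.
  exists (fun y : {dffun forall i, V i} => [ffun i => f i (y i)] : dprodZ A); split.
    by apply: prod_bij => i; case: (Hf i).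
  move=> x y; rewrite !(@weight_prod _ _ _ irr _ f _ Hreg Hex) => /ffunP E.
  apply/ffunP => j; move: (E j); rewrite !ffunE; exact: (Hf j).2.
move=> H; have [f Hf] := dchoice H.
have [c Hc] := dchoice (fun i => (Hf i).2).
exists (fun y : {dffun forall i, V i} => [ffun i => f i (y i)] : dprodZ A); split.
  by apply: prod_bij => i; case: (Hf i).
exists ([ffun j => c j] : dprodZ A) => x.
rewrite (@weight_prod _ _ _ irr _ f _ Hreg Hex); apply/ffunP => j; by rewrite !ffunE Hc.
Qed.
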